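(* Let $f\in K^{\times}$ satisfy $f'=af$ for some $a\in k$, and let $g\in K$ satisfy a nonzero homogeneous linear differential equation with coefficients in $k$. Assume $f=P(g)$ for some nonconstant polynomial $P$ with coefficients in $k$. Then there exist $\theta\in K$ with $\theta'/\theta\in k$, an integer $n\in\mathbb{Z}_{\geq 0}$ and $c,d\in k$ such that $$f=\theta^{n}\quad\text{and}\quad g=c+d\theta.$$
   Context: $K$ is a differential field of characteristic zero (derivation $y\mapsto y'$), $k\subset K$ is an algebraically closed differential subfield, and $K$ and $k$ have the same field of constants $C$. *)

(* Defs.v *)
From mathcomp Require Import all_boot all_order all_algebra.
Set Implicit Arguments. Unset Strict Implicit. Unset Printing Implicit Defensive.
Import GRing.Theory.
Local Open Scope ring_scope.

Definition is_derivation (K : fieldType) (D : K -> K) : Prop :=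
  (forall x y, D (x + y) = D x + D y) /\ (forall x y, D (x * y) = D x * y + x * D y).

Definition is_subfield (K : fieldType) (k : {pred K}) : Prop :=
  (0 \in k) /\ (1 \in k) /\
  (forall x y, x \in k -> y \in k -> (x - y \in k) /\ (x * y \in k)) /\
  (forall x, x \in k -> x^-1 \in k).

Definition D_stable (K : fieldType) (D : K -> K) (k : {pred K}) : Prop :=
  forall x, x \in k -> D x \in k.

Definition alg_closed_in (K : fieldType) (k : {pred K}) : Prop :=
  forall p : {poly K}, p \is a polyOver k -> (1 < size p)%N ->
    exists2 x, x \in k & root p x.

Definition same_constants (K : fieldType) (D : K -> K) (k : {pred K}) : Prop :=
  forall x, D x = 0 -> x \in k.

Definition satisfies_lin_ode (K : fieldType) (D : K -> K) (k : {pred K}) (y : K) : Prop :=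
  exists (n : nat) (c : nat -> K),
    (forall i, c i \in k) /\ (exists2 i, (i <= n)%N & c i != 0) /\
    \sum_(i < n.+1) c i * iter i D y = 0.

(* Main.v *)
From HB Require Import structures.
Require Import Defs.
From mathcomp Require Import all_boot all_order all_algebra.
From mathcomp Require Import ring zify.
Import GRing.Theory.
Local Open Scope ring_scope.
Section S.
Variables (K : fieldType) (D : K -> K) (k : {pred K}).
Hypothesis HD : is_derivation D.
Hypothesis Hch : [pchar K] =i pred0.
Hypothesis Hk : is_subfield k.
Hypothesis Hst : D_stable D k.
Hypothesis Hac : alg_closed_in k.
Hypothesis Hcst : same_constants D k.

Lemma kdiv : GRing.divring_closed k.
Proof.
case: Hk => k0 [k1 [kBM kV]]; split => //.
- by move=> x y xk yk; case: (kBM _ _ xk yk).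
- move=> x y xk yk; case: (kBM _ _ xk (kV _ yk)) => _ //.
Qed.
HB.instance Definition _ := GRing.isDivringClosed.Build K k kdiv.

Lemma DD x y : D (x + y) = D x + D y. Proof. by case: HD. Qed.
Lemma DM x y : D (x * y) = D x * y + x * D y. Proof. by case: HD. Qed.
Lemma D0 : D 0 = 0.
Proof. by have := DD 0 0; rewrite addr0 => /eqP; rewrite -subr_eq subrr eq_sym => /eqP. Qed.
Lemma DN x : D (- x) = - D x.
Proof. by apply/eqP; rewrite -subr_eq0 opprK -DD addNr D0. Qed.
Lemma DB x y : D (x - y) = D x - D y. Proof. by rewrite DD DN. Qed.
Lemma D1 : D 1 = 0.
Proof.
have := DM 1 1; rewrite !mul1r mulr1 => /eqP; rewrite -subr_eq0 opprD addrA subrr sub0r oppr_eq0.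
by move/eqP.
Qed.
Lemma DC (c : K) : c \in k -> D c \in k. Proof. exact: Hst. Qed.
Lemma DX x n : D (x ^+ n.+1) = n.+1%:R * x ^+ n * D x.
Proof.
elim: n => [|n IH]; first by rewrite expr1 expr0 mulr1 mul1r.
rewrite exprS DM IH -[n.+2]addn1 natrD exprS; ring.
Qed.
Lemma DV x : x != 0 -> D (x^-1) = - D x / x ^+ 2.
Proof.
move=> x0; have := DM x x^-1; rewrite mulfV // D1 => /eqP; rewrite eq_sym addr_eq0 => /eqP H.
have -> : D x^-1 = x^-1 * (x * D x^-1) by rewrite mulrA mulVf // mul1r.
have -> : x * D x^-1 = - (D x / x) by rewrite H opprK.
by field.
Qed.
Lemma Dsum (I : Type) (r : seq I) (P : pred I) (F : I -> K) :
  D (\sum_(i <- r | P i) F i) = \sum_(i <- r | P i) D (F i).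
Proof. exact: (big_morph D DD D0). Qed.
Lemma Diter_sub i x y : iter i D (x - y) = iter i D x - iter i D y.
Proof. by elim: i => //= i ->; rewrite DB. Qed.
Lemma Diter_k i x : x \in k -> iter i D x \in k.
Proof. by elim: i => //= i IH xk; apply: Hst; apply: IH. Qed.

Lemma nat_neq0 n : (n > 0)%N -> n%:R != 0 :> K.
Proof. by move=> n0; have /pcharf0P -> := Hch; rewrite -lt0n. Qed.

Lemma Dhorner p x : D p.[x] = (map_poly D p).[x] + p^`().[x] * D x.
Proof.
elim/poly_ind: p => [|p c IH].
  by rewrite map_poly0 deriv0 !horner0 D0 mul0r addr0.
have -> : map_poly D (p * 'X + c%:P) = map_poly D p * 'X + (D c)%:P.
  apply/polyP => i; rewrite coef_map_id0 ?D0 // !coefD !coefMX !coefC.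
  by case: i => [|i] /=; rewrite ?coef_map_id0 ?D0 ?add0r ?addr0.
rewrite derivMXaddC !hornerE DD DM IH /=; ring.
Qed.

Lemma map_polyD_over {p : {poly K}} : p \is a polyOver k -> map_poly D p \is a polyOver k.
Proof.
move/polyOverP=> pk; apply/polyOverP=> i; rewrite coef_map_id0 ?D0 //; exact: Hst.
Qed.

Lemma drop1 {p : {poly K}} : p`_0 = 0 -> p = drop_poly 1 p * 'X.
Proof.
move=> p0; rewrite -[LHS](poly_take_drop 1) expr1.
have -> : take_poly 1 p = 0.
  by apply/polyP => i; rewrite coef_take_poly coef0; case: i.
by rewrite add0r.
Qed.

Lemma drop_over {p : {poly K}} : p \is a polyOver k -> drop_poly 1 p \is a polyOver k.
Proof. by move/polyOverP=> pk; apply/polyOverP=> i; rewrite coef_drop_poly. Qed.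

Lemma shiftK (p : {poly K}) c : (p \Po ('X + c%:P)) \Po ('X - c%:P) = p.
Proof.
by rewrite -comp_polyA comp_polyD comp_polyX comp_polyC subrK comp_polyXr.
Qed.

Lemma trans_aux n : forall (Q : {poly K}) (y : K), (size Q <= n)%N -> Q \is a polyOver k -> y \notin k ->
  Q.[y] = 0 -> Q = 0.
Proof.
elim: n => [|n IH] Q y sQ Qk yk Qy.
  by apply/eqP; rewrite -size_poly_eq0 -leqn0.
have [->|Q0] := eqVneq Q 0; first by [].
have [s1|s2] := leqP (size Q) 1.
  move: Qy; rewrite (size1_polyC s1) hornerC => Q00.
  by move: Q0; rewrite (size1_polyC s1) Q00 eqxx.
have [r rk /rootP Qr] := Hac Q Qk s2.
set Qt := Q \Po ('X + r%:P).
have sQt : size Qt = size Q by rewrite size_comp_poly2 // size_XaddC.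
have Qtk : Qt \is a polyOver k by rewrite polyOver_comp // polyOverXaddC.
have Qt0 : Qt`_0 = 0 by rewrite -horner_coef0 horner_comp !hornerE.
have yr0 : y - r != 0.
  by apply: contraNneq yk => /eqP; rewrite subr_eq0 => /eqP ->.
have yrk : y - r \notin k.
  by apply: contra yk => H; rewrite -(subrK r y) rpredD.
have : drop_poly 1 Qt = 0.
  apply: (IH _ (y - r)) => //; first by rewrite size_drop_poly sQt subn1 -ltnS (ltn_predK s2).
    exact: drop_over.
  have := congr1 (fun p => p.[y - r]) (drop1 Qt0).
  have := congr1 (fun p => p.[y - r]) (drop1 Qt0); rewrite /= hornerM hornerX.
  rewrite horner_comp !hornerE subrK Qy => /esym/eqP.
  by rewrite mulf_eq0 (negPf yr0) orbF => /eqP.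
move=> H; move: Q0; rewrite -size_poly_eq0 -sQt (drop1 Qt0) H mul0r size_poly0 //.
Qed.

Lemma trans Q y : Q \is a polyOver k -> y \notin k -> Q.[y] = 0 -> Q = 0.
Proof. exact: (@trans_aux (size Q)). Qed.

Lemma root_factor S q : S \is a polyOver k -> q \in k -> S.[q] = 0 ->
  exists2 S1, S1 \is a polyOver k & S = S1 * ('X - q%:P).
Proof.
move=> Sk qk Sq; set St := S \Po ('X + q%:P).
have Stk : St \is a polyOver k by rewrite polyOver_comp // polyOverXaddC.
have St0 : St`_0 = 0 by rewrite -horner_coef0 horner_comp !hornerE.
exists (drop_poly 1 St \Po ('X - q%:P)).
  by rewrite polyOver_comp ?polyOverXsubC ?drop_over.
by rewrite -[X in _ = _ * X](comp_polyX ('X - q%:P)) -comp_polyM -(drop1 St0) shiftK.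
Qed.

Lemma factor0_aux n : forall p : {poly K}, (size p <= n)%N -> p \is a polyOver k -> p != 0 ->
  exists e A, [/\ A \is a polyOver k, A.[0] != 0 & p = A * 'X^e].
Proof.
elim: n => [|n IH] p sp pk p0.
  by move: p0; rewrite -size_poly_eq0 -leqn0 sp.
have [pz|pnz] := eqVneq p`_0 0; last first.
  by exists 0%N, p; rewrite expr0 mulr1 horner_coef0.
have dk := drop_over pk.
have d0 : drop_poly 1 p != 0.
  by apply: contraNneq p0 => H; rewrite (drop1 pz) H mul0r.
have sd : (size (drop_poly 1 p) <= n)%N.
  by rewrite size_drop_poly leq_subLR add1n.
have [e [A [Ak A0 Ed]]] := IH _ sd dk d0.
by exists e.+1, A; rewrite (drop1 pz) Ed exprSr mulrA.
Qed.

Lemma factor0 p : p \is a polyOver k -> p != 0 ->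
  exists e A, [/\ A \is a polyOver k, A.[0] != 0 & p = A * 'X^e].
Proof. exact: (@factor0_aux (size p)). Qed.

Ltac poly_over := repeat (apply: polyOverXn || apply: polyOverX || apply: rpredB || apply: rpredD || apply: rpredM || apply: rpredX); rewrite ?polyOverC ?rpred_nat //.

Lemma DXn x n : D (x ^+ n) = n%:R * x ^+ n.-1 * D x.
Proof. by case: n => [|n]; rewrite ?expr0 ?D1 ?mul0r // DX. Qed.

Section Pole.
Variables (u : K) (A B : {poly K}) (e : nat).
Hypotheses (Ak : A \is a polyOver k) (Bk : B \is a polyOver k)
  (A0 : A.[0] != 0) (B0 : B.[0] != 0).
Hypothesis Hu : u ^+ e.+1 * A.[u] * D u = B.[u].

Lemma pole_step z s j C : C \is a polyOver k -> C.[0] != 0 ->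
  z * u ^+ s.+1 * A.[u] ^+ j.+1 = C.[u] ->
  exists2 C2, C2 \is a polyOver k /\ C2.[0] != 0 &
    D z * u ^+ (s.+1 + e.+2) * A.[u] ^+ j.+3 = C2.[u].
Proof.
move=> Ck C0 hC.
set C2 := 'X^(e.+2) * A ^+ 2 * map_poly D C + 'X * A * C^`() * B
  - (s.+1%:R)%:P * (C * B * A)
  - (j.+1%:R)%:P * (C * ('X^(e.+2) * A * map_poly D A + 'X * A^`() * B)).
exists C2; first split.
- have hX : 'X \is a polyOver k by exact: polyOverX.
  have hXn : 'X^(e.+2) \is a polyOver k by exact: polyOverXn.
  have hCd := polyOver_deriv Ck; have hAd := polyOver_deriv Ak.
  have hCD := map_polyD_over Ck; have hAD := map_polyD_over Ak.
  rewrite /C2; move: hXn; move: ('X^(e.+2)) => XE hXn; repeat (apply: rpredB || apply: rpredD || apply: rpredMn || apply: rpredM || apply: rpredX); by rewrite ?polyOverC ?rpred_nat.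
- rewrite /C2 !(hornerE, hornerMn) /= !expr0n /= !(mul0r, mulr0, add0r, addr0, sub0r, subr0, mul0rn) oppr_eq0.
  by rewrite !mulf_neq0 // nat_neq0.
have hDC : D C.[u] = D z * u^+s.+1 * A.[u]^+j.+1 + z * (s.+1%:R * u^+s * D u) * A.[u]^+j.+1
    + z * u^+s.+1 * (j.+1%:R * A.[u]^+j * D A.[u]).
  rewrite -hC !DM !DXn /= !exprS; move: (u^+s) (A.[u]^+j) (D A.[u]) => U W DA; ring.
have hCD : (map_poly D C).[u] = D C.[u] - C^`().[u] * D u by rewrite Dhorner addrK.
have hAD : (map_poly D A).[u] = D A.[u] - A^`().[u] * D u by rewrite Dhorner addrK.
have p1 : u^+(s.+1 + e.+2) = u^+s * u * (u^+e * u * u) by rewrite exprD !exprSr.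
have p2 : u^+s.+1 = u^+s * u by rewrite exprSr.
have p3 : u^+e.+1 = u^+e * u by rewrite exprSr.
have p4 : u^+e.+2 = u^+e * u * u by rewrite !exprSr.
have p5 : A.[u]^+j.+3 = A.[u]^+j * A.[u] * A.[u] * A.[u] by rewrite !exprSr.
have p6 : A.[u]^+j.+1 = A.[u]^+j * A.[u] by rewrite exprSr.
have p7 : A.[u]^+2 = A.[u] * A.[u] by rewrite expr2.
rewrite p1 p5.
rewrite /C2 !(hornerXn, hornerD, hornerN, hornerM, hornerC, hornerX, horner_exp) hCD hDC hAD -hC -Hu.
rewrite p2 p3 ?p4 p6 ?p7.
move: (u^+s) (u^+e) (A.[u]^+j) (D A.[u]) (s.+1%:R : K) (j.+1%:R : K) => U E W DA S J.
ring.
Qed.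

Lemma pole_iter m : exists2 C, C \is a polyOver k /\ C.[0] != 0 &
  iter m.+1 D u * u ^+ (e + m * e.+2).+1 * A.[u] ^+ (m.*2).+1 = C.[u].
Proof.
elim: m => [|m [C [Ck C0] hC]].
  by exists B => //; rewrite /= mul0n addn0 expr1 -Hu; ring.
have [C2 [C2k C20] hC2] := pole_step _ _ _ _ Ck C0 hC.
exists C2 => //; rewrite -hC2 /=.
have -> : (e + m.+1 * e.+2).+1 = ((e + m * e.+2).+1 + e.+2)%N by rewrite mulSn; lia.
by have -> : ((m.+1).*2).+1 = ((m.*2).+3)%N by rewrite doubleS.
Qed.

Definition Tm m := u ^+ (e + m * e.+2).+1 * A.[u] ^+ (m.*2).+1.

Lemma pole_sum (c : nat -> K) m : (forall i, c i \in k) ->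
  exists2 V, V \is a polyOver k /\ V.[0] = 0 &
  (\sum_(1 <= i < m.+1) c i * iter i D u) * Tm m = V.[u].
Proof.
move=> ck; elim: m => [|m [V [Vk V0] hV]].
  by exists 0; rewrite ?big_geq ?mul0r ?horner0 ?rpred0.
have [C [Ck C0] hC] := pole_iter m.
exists ((V + (c m.+1)%:P * C) * 'X^(e.+2) * A ^+ 2); first split.
- by poly_over.
- by rewrite !(hornerXn, hornerD, hornerM, hornerC, horner_exp) expr0n /= mulr0 mul0r.
rewrite !(hornerXn, hornerD, hornerM, hornerC, horner_exp) -hC -hV.
rewrite big_nat_recr //= /Tm.
have -> : (e + m.+1 * e.+2).+1 = ((e + m * e.+2).+1 + e.+2)%N by rewrite mulSn; lia.
have -> : ((m.+1).*2).+1 = ((m.*2).+1 + 2)%N by rewrite doubleS; lia.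
rewrite !exprD !expr2.
move: (u ^+ (e + m * e.+2).+1) (A.[u] ^+ (m.*2).+1) (u ^+ e.+2) => U W E.
move: (\sum_(1 <= i < m.+1) c i * iter i D u) => S.
ring.
Qed.

Lemma pole_contra (c : nat -> K) m kap : u \notin k -> (forall i, c i \in k) ->
  c m.+1 != 0 -> kap \in k -> \sum_(i < m.+2) c i * iter i D u = kap -> False.
Proof.
move=> uk ck cm kk hs.
have [V [Vk V0] hV] := pole_sum c m ck.
have [C [Ck C0] hC] := pole_iter m.
set W := ((c 0)%:P * 'X - kap%:P) * 'X^((e + m * e.+2).+1) * A ^+ (m.*2).+1 + V + (c m.+1)%:P * C.
have Wk : W \is a polyOver k.
  by rewrite /W; poly_over.
have Wu : W.[u] = 0.
  rewrite /W !(hornerXn, hornerD, hornerN, hornerM, hornerC, hornerX, horner_exp) -hV -hC.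
  move: hs; rewrite -(big_mkord xpredT (fun i => c i * iter i D u)) big_ltn // big_nat_recr //=.
  rewrite /Tm => hs.
  have -> : kap = c 0 * u + (\sum_(1 <= i < m.+1) c i * iter i D u) + c m.+1 * iter m.+1 D u.
    by rewrite -hs addrA.
  move: (u ^+ (e + m * e.+2).+1) (A.[u] ^+ (m.*2).+1) => U X'.
  move: (\sum_(1 <= i < m.+1) c i * iter i D u) => S.
  rewrite /=; ring.
have := trans W u Wk uk Wu => /(congr1 (fun p => p.[0])).
rewrite horner0 /W !(hornerXn, hornerD, hornerN, hornerM, hornerC, hornerX, horner_exp) V0.
rewrite expr0n /= !(mulr0, mul0r, add0r) => /eqP.
by rewrite mulf_eq0 (negPf cm) (negPf C0).
Qed.
End Pole.

Lemma ode_norm g : g \notin k -> satisfies_lin_ode D k g ->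
  exists c m, [/\ forall i, c i \in k, c m.+1 != 0 &
    \sum_(i < m.+2) c i * iter i D g = 0].
Proof.
move=> gk [n [c [ck [[i0 i0n ci0] hs]]]].
pose P := fun i => (i <= n)%N && (c i != 0).
have exP : exists i, P i by exists i0; rewrite /P i0n ci0.
have ubP : forall i, P i -> (i <= n)%N by move=> i /andP [].
have [M /andP [Mn cM] Mmax] := ex_maxnP exP ubP.
have hsM : \sum_(i < M.+1) c i * iter i D g = 0.
  rewrite -[RHS]hs -!(big_mkord xpredT (fun i => c i * iter i D g)).
  rewrite [RHS](@big_cat_nat _ _ _ M.+1) //= [X in _ + X]big1_seq ?addr0 //.
  move=> i /andP [_]; rewrite mem_index_iota => /andP [Mi iN].
  have [-> |ci] := eqVneq (c i) 0; first by rewrite mul0r.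
  have : P i by rewrite /P ci andbT -ltnS.
  by move/Mmax => iM; move: Mi; rewrite ltnNge iM.
case: M Mn cM Mmax hsM => [|m] Mn cM _ hsM.
  move: hsM; rewrite big_ord1 /= => /eqP; rewrite mulf_eq0 (negPf cM) /= => /eqP g0.
  by move: gk; rewrite g0 rpred0.
by exists c, m.
Qed.

Lemma stepA g : g \notin k -> satisfies_lin_ode D k g -> forall n (S N : {poly K}),
  (size S <= n)%N -> S \is a polyOver k -> N \is a polyOver k -> S != 0 ->
  S.[g] * D g = N.[g] -> exists2 R, R \is a polyOver k & D g = R.[g].
Proof.
move=> gk hode n; elim: n => [|n IH] S N sS Sk Nk S0 hSN.
  by move: S0; rewrite -size_poly_eq0 -leqn0 sS.
have [s1|s2] := leqP (size S) 1.
  have eS := size1_polyC s1.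
  have c0 : S`_0 != 0 by apply: contraNneq S0 => H; rewrite eS H.
  have ck : S`_0 \in k by move/polyOverP: Sk.
  exists ((S`_0)^-1%:P * N); first by rewrite rpredM // polyOverC rpredV.
  have Sg : S.[g] = S`_0 by rewrite {1}eS hornerC.
  by rewrite hornerM hornerC -hSN Sg mulrA mulVf // mul1r.
have [q qk /rootP Sq] := Hac S Sk s2.
have gq0 : g - q != 0.
  by apply: contraNneq gk => /eqP; rewrite subr_eq0 => /eqP ->.
have gqk : g - q \notin k.
  by apply: contra gk => H; rewrite -(subrK q g) rpredD.
have [Nq|Nq] := eqVneq N.[q] 0.
  have [S1 S1k eS1] := root_factor _ _ Sk qk Sq.
  have [N1 N1k eN1] := root_factor _ _ Nk qk Nq.
  have S10 : S1 != 0 by apply: contraNneq S0 => H; rewrite eS1 H mul0r.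
  apply: (IH S1 N1) => //.
    move: sS; rewrite eS1 size_mul ?polyXsubC_eq0 // size_XsubC addn2 /=.
    by [].
  move: hSN; rewrite eS1 eN1 !hornerM hornerXsubC => /eqP.
  rewrite mulrAC -subr_eq0 -mulrBl mulf_eq0 (negPf gq0) orbF subr_eq0.
  by move/eqP.
exfalso.
set u := g - q.
set St := S \Po ('X + q%:P).
have Stk : St \is a polyOver k by rewrite polyOver_comp // polyOverXaddC.
have St0 : St != 0.
  by rewrite -size_poly_eq0 size_comp_poly2 ?size_XaddC // size_poly_eq0.
have [e0 [A [Ak A0 eSt]]] := factor0 _ Stk St0.
case: e0 eSt => [|e] eSt.
  by move: A0; rewrite -[A]mulr1 -(expr0 'X) -eSt horner_comp !hornerE Sq eqxx.
set B := (N - (D q)%:P * S) \Po ('X + q%:P).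
have Bk : B \is a polyOver k.
  by rewrite polyOver_comp ?polyOverXaddC // rpredB // rpredM // polyOverC DC.
have B0 : B.[0] != 0.
  by rewrite horner_comp !(hornerD, hornerN, hornerM, hornerC, hornerX) add0r Sq mulr0 subr0.
have Hu : u ^+ e.+1 * A.[u] * D u = B.[u].
  have : St.[u] = S.[g] by rewrite horner_comp !hornerE subrK.
  rewrite eSt hornerM hornerXn => hS.
  rewrite /B horner_comp !hornerE subrK /u DB -hSN -hS; move: ((g - q) ^+ e.+1) => E; ring.
have [c [m [ck cm hs]]] := ode_norm _ gk hode.
apply: (@pole_contra u A B e Ak Bk A0 B0 Hu c m (- \sum_(i < m.+2) c i * iter i D q)).
- exact: gqk.
- exact: ck.
- exact: cm.
- by rewrite rpredN rpred_sum // => i _; rewrite rpredM ?Diter_k.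
rewrite /u; under eq_bigr do rewrite Diter_sub mulrBr.
by rewrite sumrB hs sub0r.
Qed.

Lemma coef_ne0_size (p : {poly K}) i : p`_i != 0 -> (i < size p)%N.
Proof. by apply: contraR; rewrite -leqNgt => /(nth_default 0) ->. Qed.

Lemma stepA2 g f a P : g \notin k -> satisfies_lin_ode D k g ->
  a \in k -> D f = a * f -> P \is a polyOver k -> (1 < size P)%N -> f = P.[g] ->
  exists al be, [/\ al \in k, be \in k & D g = al * g + be].
Proof.
move=> gk hode ak hDf Pk sP fP.
set N := a *: P - map_poly D P.
have Nk : N \is a polyOver k by rewrite rpredB ?polyOverZ ?map_polyD_over.
have dPk : P^`() \is a polyOver k by rewrite polyOver_deriv.
have [m sPm] : exists m, size P = m.+2 by case: (size P) sP => [|[|m]] // _; exists m.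
have cP : P^`()`_m != 0.
  rewrite coef_deriv -mulr_natr mulf_neq0 ?nat_neq0 //.
  have -> : m.+1 = (size P).-1 by rewrite sPm.
  by rewrite -lead_coefE lead_coef_eq0 -size_poly_eq0 sPm.
have dP0 : P^`() != 0 by apply: contraNneq cP => ->; rewrite coef0.
have sdP : (m.+1 <= size P^`())%N := coef_ne0_size _ _ cP.
have hSN : P^`().[g] * D g = N.[g].
  rewrite /N hornerD hornerN hornerZ -fP -hDf fP Dhorner; ring.
have [R Rk hR] := stepA _ gk hode _ _ _ (leqnn _) dPk Nk dP0 hSN.
have ePR : P^`() * R = N.
  apply/eqP; rewrite -subr_eq0; apply/eqP; apply: (trans _ g) => //.
    by rewrite rpredB ?rpredM.
  by rewrite hornerD hornerN hornerM -hR hSN subrr.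
have sR : (size R <= 2)%N.
  have [->|R0] := eqVneq R 0; first by rewrite size_poly0.
  have sN : (size N <= size P)%N.
    rewrite /N (leq_trans (size_polyD _ _)) // size_polyN geq_max size_scale_leq.
    by rewrite /map_poly size_poly.
  move: sN; rewrite -ePR size_mul // sPm -subn1 => h; move: h sdP; move: (size R) (size P^`()) => r p. lia.
exists R`_1, R`_0; split; try by move/polyOverP: Rk.
rewrite hR (horner_coef_wide _ sR) !big_ord_recr big_ord0 /= add0r expr0 expr1 mulr1; ring.
Qed.

Lemma stepB g f a P al be : g \notin k -> al \in k -> be \in k -> D g = al * g + be ->
  f != 0 -> a \in k -> D f = a * f -> P \is a polyOver k -> (1 < size P)%N -> f = P.[g] ->
  exists (theta : K) (n : nat) (c d : K),
      [/\ theta != 0, D theta / theta \in k, c \in k & d \in k] /\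
      f = theta ^+ n /\ g = c + d * theta.
Proof.
move=> gk alk bek hDg f0 ak hDf Pk sP fP.
have [r rk /rootP Pr] := Hac P Pk sP.
set u := g - r.
have u0 : u != 0 by apply: contraNneq gk => /eqP; rewrite subr_eq0 => /eqP ->.
have uk : u \notin k by apply: contra gk => H; rewrite -(subrK r g) rpredD.
set Q := P \Po ('X + r%:P).
have Qk : Q \is a polyOver k by rewrite polyOver_comp // polyOverXaddC.
have fQ : f = Q.[u] by rewrite horner_comp !hornerE subrK.
have Q0 : Q`_0 = 0 by rewrite -horner_coef0 horner_comp !hornerE ?add0r.
set ga := al * r + be - D r.
have gak : ga \in k by rewrite rpredB ?rpredD ?rpredM ?DC.
have hDu : D u = al * u + ga by rewrite /u /ga DB hDg; ring.
set E := map_poly D Q + al *: (Q^`() * 'X) + ga *: Q^`() - a *: Q.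
have Ek : E \is a polyOver k.
  rewrite rpredB ?rpredD ?polyOverZ ?map_polyD_over ?rpredM ?polyOver_deriv ?polyOverX //.
have E0 : E = 0 :> {poly K}.
  apply: (trans E u) => //.
  rewrite /E !(hornerD, hornerN, hornerZ, hornerMX) -fQ -hDf fQ Dhorner hDu; ring.
have hE i : D Q`_i + al * (if i == 0%N then 0 else Q`_i *+ i) + ga * (Q`_i.+1 *+ i.+1)
    - a * Q`_i = 0.
  have := congr1 (fun p : {poly K} => p`_i) E0.
  rewrite /E coef0 !(coefD, coefB, coefZ, coefMX) coef_map_id0 ?D0 // !coef_deriv.
  by rewrite coefN coefZ; case: i.
have Qne0 : Q != 0 by apply: contraNneq f0 => H; rewrite fQ H horner0.
have ga0 : ga = 0.
  pose Pm := fun i => Q`_i != 0.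
  have exP : exists i, Pm i.
    by exists (size Q).-1; rewrite /Pm -lead_coefE lead_coef_eq0.
  have [j Qj jmin] := ex_minnP exP.
  case: j Qj jmin => [|j] Qj jmin; first by move: Qj; rewrite /Pm Q0 eqxx.
  have Qj' : Q`_j = 0.
    apply/eqP; apply: contraT => H; have := jmin j H; by rewrite ltnn.
  move: Qj; rewrite /Pm => Qj.
  have := hE j; rewrite Qj' D0 mul0rn if_same mulr0 add0r mulr0 subr0 => /eqP.
  by rewrite add0r mulf_eq0 -mulr_natr mulf_eq0 (negPf Qj) (negPf (nat_neq0 j.+1 isT)) !orbF => /eqP.
have hDb i : D Q`_i = a * Q`_i - al * (Q`_i * i%:R).
  have := hE i; rewrite ga0 mul0r addr0.
  have -> : (if i == 0%N then 0 else Q`_i *+ i) = Q`_i * i%:R.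
    by case: i => [|i]; rewrite ?mulr0 // mulr_natr.
  move=> H; apply/eqP; rewrite -subr_eq0; apply/eqP; rewrite -[RHS]H.
  move: (i%:R : K) (D Q`_i) (Q`_i) => I X Y; ring.
have hDw i : D (Q`_i * u ^+ i) = a * (Q`_i * u ^+ i).
  case: i => [|i]; first by rewrite expr0 !mulr1 hDb; ring.
  rewrite DM DX hDb hDu ga0 addr0 exprS; move: (u ^+ i) => U; ring.
set n := (size Q).-1.
have bn : Q`_n != 0 by rewrite -lead_coefE lead_coef_eq0.
have bi : forall i, (i < n)%N -> Q`_i = 0.
  move=> i lin; apply/eqP; apply: contraT => bi0.
  have wi0 : Q`_i * u ^+ i != 0 by rewrite mulf_neq0 // expf_neq0.
  have wn0 : Q`_n * u ^+ n != 0 by rewrite mulf_neq0 // expf_neq0.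
  set z := (Q`_n * u ^+ n) / (Q`_i * u ^+ i).
  have zk : z \in k.
    apply: Hcst; rewrite /z DM DV // !hDw; move: wi0; move: (Q`_n * u ^+ n) (Q`_i * u ^+ i) => X Y Y0; by field.
  have un : u ^+ (n - i) = z * Q`_i / Q`_n.
    have en : u ^+ n = u ^+ (n - i) * u ^+ i by rewrite -exprD subnK // ltnW.
    have ui0 : u ^+ i != 0 by rewrite expf_neq0.
    rewrite /z en; move: ui0 bi0 bn; move: (u ^+ (n - i)) (u ^+ i) (Q`_i) (Q`_n) => X Y bI bN Y0 bI0 bN0.
    by field; rewrite Y0 bI0 bN0.
  have bik : Q`_i \in k by move/polyOverP: Qk.
  have bnk : Q`_n \in k by move/polyOverP: Qk.
  have unk : u ^+ (n - i) \in k by rewrite un rpredM ?rpredV // rpredM.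
  have := trans ('X^(n - i) - (u ^+ (n - i))%:P) u.
  rewrite rpredB ?polyOverXn ?polyOverC // hornerD hornerN hornerXn hornerC subrr.
  move=> /(_ isT uk erefl) /eqP; rewrite -size_poly_eq0 size_XnsubC ?subn_gt0 //.
have fb : f = Q`_n * u ^+ n.
  rewrite fQ horner_coef.
  have -> : size Q = n.+1 by rewrite /n prednK // size_poly_gt0.
  rewrite big_ord_recr /= big1 ?add0r // => i _; rewrite bi ?mul0r //.
case: n bn bi fb => [|n] bn bi fb.
  by move: f0; rewrite fb expr0 mulr1 Q0 eqxx.
have XCk : 'X^(n.+1) - (Q`_n.+1)%:P \is a polyOver k.
  by rewrite rpredB ?polyOverXn ?polyOverC //; move/polyOverP: Qk.
have sXn : (1 < size ('X^(n.+1) - (Q`_n.+1)%:P)%R)%N by rewrite size_XnsubC.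
have [s sk /rootP sr] := Hac _ XCk sXn.
move: sr; rewrite hornerD hornerN hornerXn hornerC => /eqP; rewrite subr_eq0 => /eqP sr.
have s0 : s != 0 by apply: contraNneq bn => s0; rewrite -sr s0 expr0n.
have bk : Q`_n.+1 \in k by move/polyOverP: Qk.
exists (s * u), n.+1, r, s^-1; split; last split.
- split => //; first by rewrite mulf_neq0.
  + have -> : D (s * u) / (s * u) = D s / s + al.
      by rewrite DM hDu ga0 addr0; field; rewrite s0 u0.
    by rewrite rpredD // rpredM ?rpredV ?DC.
  + by rewrite rpredV.
- by rewrite fb exprMn sr.
- rewrite mulrA mulVf // mul1r /u; ring.
Qed.

End S.

Theorem corollary13 (K : fieldType) (D : K -> K) (k : {pred K}) :
  is_derivation D ->
  [pchar K] =i pred0 ->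
  is_subfield k -> D_stable D k -> alg_closed_in k -> same_constants D k ->
  forall (f a g : K) (P : {poly K}),
    f != 0 -> a \in k -> D f = a * f ->
    satisfies_lin_ode D k g ->
    P \is a polyOver k -> (1 < size P)%N -> f = P.[g] ->
    exists (theta : K) (n : nat) (c d : K),
      [/\ theta != 0, D theta / theta \in k, c \in k & d \in k] /\
      f = theta ^+ n /\ g = c + d * theta.
Proof.
move=> HD Hch Hk Hst Hac Hcst f a g P f0 ak hDf hode Pk sP fP.
case: (boolP (g \in k)) => gk.
  have k0 : 0 \in k by case: Hk.
  exists f, 1%N, g, 0; split; last by rewrite expr1 mul0r addr0.
  by split => //; rewrite hDf mulfK.
have [al [be [alk bek hDg]]] := @stepA2 K D k HD Hch Hk Hst Hac g f a P gk hode ak hDf Pk sP fP.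
exact: (@stepB K D k HD Hch Hk Hst Hac Hcst g f a P al be gk alk bek hDg f0 ak hDf Pk sP fP).
Qed.
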